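(* Let $L$ be a $C$-lattice, $n\ge 1$, $m$ a maximal element of $L$ and $q$ a proper element of $L$. (1) If $q$ is a quasi $n$-absorbing element of $L$, then $q_m$ is a quasi $n$-absorbing element of $L_m$. (2) If $q$ is a weakly quasi $n$-absorbing element of $L$, then $q_m$ is a weakly quasi $n$-absorbing element of $L_m$.
   Context: A multiplicative lattice is a complete lattice $L$ with least element $0$ and compact greatest element $1$, equipped with a commutative, associative product that distributes over arbitrary joins and has $1$ as multiplicative identity. An element $a$ is compact if $a\le\bigvee_{\alpha\in I}a_\alpha$ implies $a\le\bigvee_{\alpha\in I_0}a_\alpha$ for some finite $I_0\subseteq I$; $L_*$ denotes the set of compact elements. A $C$-lattice is a multiplicative lattice generated under joins by a multiplicatively closed set $C$ of compact elements. A proper element $m$ is maximal if $m<x\le1$ implies $x=1$. For a multiplicatively closed subset $S\subseteq L_*$ and $a\in L$, $a_S=\bigvee\{x\in L_*: xs\le a \text{ for some } s\in S\}$, and $L_S=\{a_S:a\in L\}$ is a multiplicative lattice with the order of $L$ and product $a_S\circ b_S=(a_Sb_S)_S$. For $m$ maximal (hence prime), $L_m=L_S$ and $q_m=q_S$ with $S=\{x\in L_*: x\not\le m\}$. $a^0=1$. A proper element $q$ of a multiplicative lattice $M$ is quasi $n$-absorbing if whenever $a^nb\le q$ for some compact $a,b\in M$, then $a^n\le q$ or $a^{n-1}b\le q$; it is weakly quasi $n$-absorbing if whenever $0_M\ne a^nb\le q$ for compact $a,b\in M$, then $a^n\le q$ or $a^{n-1}b\le q$. *)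

(* Defs.v *)
From Stdlib Require Import List.

(** The least element is [sup (fun _ => False)]. *)
Record MultLattice := {
  carrier :> Type;
  le : carrier -> carrier -> Prop;
  le_refl : forall x, le x x;
  le_trans : forall x y z, le x y -> le y z -> le x z;
  le_antisym : forall x y, le x y -> le y x -> x = y;
  sup : (carrier -> Prop) -> carrier;
  sup_ub : forall (F : carrier -> Prop) x, F x -> le x (sup F);
  sup_least : forall (F : carrier -> Prop) u, (forall x, F x -> le x u) -> le (sup F) u;
  mul : carrier -> carrier -> carrier;
  mulC : forall x y, mul x y = mul y x;
  mulA : forall x y z, mul x (mul y z) = mul (mul x y) z;
  one : carrier;
  one_top : forall x, le x one;
  mul1x : forall x, mul one x = x;
  mul_sup : forall a (F : carrier -> Prop),
      mul a (sup F) = sup (fun y => exists x, F x /\ y = mul a x);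
  one_compact : forall F : carrier -> Prop, le one (sup F) ->
      exists l : list carrier, (forall x, In x l -> F x) /\ le one (sup (fun x => In x l))
}.

Arguments le {m}.
Arguments sup {m}.
Arguments mul {m}.
Arguments one {m}.

Section Defs.
Variable L : MultLattice.

Definition compactL (a : L) : Prop :=
  forall F : L -> Prop, le a (sup F) ->
    exists l : list L, (forall x, In x l -> F x) /\ le a (sup (fun x => In x l)).

Definition C_lattice : Prop :=
  exists C : L -> Prop,
    (forall c, C c -> compactL c) /\ C one /\
    (forall x y, C x -> C y -> C (mul x y)) /\
    (forall a : L, a = sup (fun c => C c /\ le c a)).

Definition maximal (m : L) : Prop :=
  m <> one /\ forall x : L, le m x -> x <> m -> x = one.

(** a_S for S = {x in L_* : x not <= m}, i.e. a_m *)
Definition locM (m a : L) : L :=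
  sup (fun x => compactL x /\
        exists s, compactL s /\ ~ le s m /\ le (mul x s) a).

Definition inLm (m x : L) : Prop := exists a : L, x = locM m a.
Definition mulLm (m x y : L) : L := locM m (mul x y).
End Defs.

Arguments compactL {L}.
Arguments C_lattice L : clear implicits.
Arguments maximal {L}.
Arguments locM {L}.
Arguments inLm {L}.
Arguments mulLm {L}.

(** Generic notions for a multiplicative lattice M presented as a subset [P] of a
    type T, with order [le], product [mul] and identity [one]. Joins and
    compactness are taken *inside M* (order-theoretically). *)
Section Generic.
Variables (T : Type) (P : T -> Prop) (le : T -> T -> Prop)
          (mul : T -> T -> T) (one : T).

Definition isLub (F : T -> Prop) (u : T) : Prop :=
  P u /\ (forall x, F x -> le x u) /\
  (forall v, P v -> (forall x, F x -> le x v) -> le u v).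

Definition compactIn (a : T) : Prop :=
  P a /\ forall (F : T -> Prop) (u : T), (forall x, F x -> P x) -> isLub F u -> le a u ->
    exists l : list T, (forall x, In x l -> F x) /\
      (forall v, P v -> (forall x, In x l -> le x v) -> le a v).

Definition isBottom (z : T) : Prop := P z /\ forall x, P x -> le z x.

Fixpoint pw (a : T) (n : nat) : T :=
  match n with O => one | S k => mul a (pw a k) end.

Definition quasi_nabs (n : nat) (q : T) : Prop :=
  P q /\ q <> one /\
  forall a b, compactIn a -> compactIn b ->
    le (mul (pw a n) b) q -> le (pw a n) q \/ le (mul (pw a (n - 1)) b) q.

Definition weakly_quasi_nabs (n : nat) (q : T) : Prop :=
  P q /\ q <> one /\
  forall a b, compactIn a -> compactIn b ->
    ~ isBottom (mul (pw a n) b) ->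
    le (mul (pw a n) b) q -> le (pw a n) q \/ le (mul (pw a (n - 1)) b) q.
End Generic.

Arguments isLub {T}.
Arguments compactIn {T}.
Arguments isBottom {T}.
Arguments pw {T}.
Arguments quasi_nabs {T}.
Arguments weakly_quasi_nabs {T}.

(* Main.v *)
Require Import Defs.
From Stdlib Require Import List Lia.
Import ListNotations.

Section S.
Variable L : MultLattice.

Definition j2 (a b : L) : L := sup (fun t => t = a \/ t = b).

Lemma le_j2l (a b : L) : le a (j2 a b). Proof. apply sup_ub; auto. Qed.
Lemma le_j2r (a b : L) : le b (j2 a b). Proof. apply sup_ub; auto. Qed.

Lemma mul_mono_r (a b c : L) : le a b -> le (mul c a) (mul c b).
Proof.
  intros H. assert (E : b = j2 a b).
  { apply le_antisym. apply le_j2r. apply sup_least. intros t [-> | ->]; auto using le_refl. }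
  rewrite E. unfold j2. rewrite mul_sup. apply sup_ub. exists a; auto.
Qed.

Lemma mul_mono_l (a b c : L) : le a b -> le (mul a c) (mul b c).
Proof. intros; rewrite (mulC _ a), (mulC _ b); apply mul_mono_r; auto. Qed.

Lemma mul_mono2 (a b c d : L) : le a b -> le c d -> le (mul a c) (mul b d).
Proof. intros; eapply le_trans; [apply mul_mono_l; eauto| apply mul_mono_r; auto]. Qed.

Lemma mulx1 (a : L) : mul a one = a.
Proof. rewrite mulC; apply mul1x. Qed.

Lemma mul_le_l (a b : L) : le (mul a b) a.
Proof. rewrite <- (mulx1 a) at 2. apply mul_mono_r, one_top. Qed.

Lemma sup_mono (F G : L -> Prop) : (forall x, F x -> G x) -> le (sup F) (sup G).
Proof. intros H; apply sup_least; intros; apply sup_ub; auto. Qed.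

Lemma sup_mul (F G : L -> Prop) (W : L) :
  (forall f g, F f -> G g -> le (mul f g) W) -> le (mul (sup F) (sup G)) W.
Proof.
  intros H. rewrite mul_sup. apply sup_least. intros y [g [Gg ->]].
  rewrite mulC, mul_sup. apply sup_least. intros y [f [Ff ->]].
  rewrite mulC; auto.
Qed.

Lemma sup_mul1 (F : L -> Prop) (t W : L) :
  (forall f, F f -> le (mul f t) W) -> le (mul (sup F) t) W.
Proof.
  intros H. rewrite mulC, mul_sup. apply sup_least. intros y [f [Ff ->]].
  rewrite mulC; auto.
Qed.

Lemma shuffle (a b c d : L) : mul (mul a b) (mul c d) = mul (mul a c) (mul b d).
Proof.
  rewrite <- mulA. rewrite (mulA _ b c d). rewrite (mulC _ b c).
  rewrite <- (mulA _ c b d). rewrite mulA. reflexivity.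
Qed.

Lemma collect (F : L -> Prop) (l : list L) :
  (forall e, In e l -> exists l0, (forall x, In x l0 -> F x) /\ le e (sup (fun x => In x l0))) ->
  exists lF, (forall x, In x lF -> F x) /\ forall e, In e l -> le e (sup (fun x => In x lF)).
Proof.
  induction l as [|a l IH]; intros H.
  - exists []; split; [intros x []| intros e []].
  - destruct (H a (or_introl eq_refl)) as [l1 [H1 H2]].
    destruct IH as [l2 [H3 H4]]. { intros e He; apply H; right; auto. }
    exists (l1 ++ l2). split.
    + intros x Hx; apply in_app_or in Hx; destruct Hx; auto.
    + intros e [<-|He].
      * eapply le_trans; [exact H2|]. apply sup_mono; intros; apply in_or_app; auto.
      * eapply le_trans; [apply H4; auto|]. apply sup_mono; intros; apply in_or_app; auto.
Qed.

Lemma compact_list (l : list L) : (forall e, In e l -> compactL e) ->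
  compactL (sup (fun x => In x l)).
Proof.
  intros Hl F HF. destruct (collect F l) as [lF [H1 H2]].
  - intros e He. apply Hl; auto. eapply le_trans; [|exact HF]. apply sup_ub; auto.
  - exists lF; split; auto. apply sup_least; auto.
Qed.

Lemma compact_of_list (w : L) (l : list L) : (forall e, In e l -> compactL e) ->
  le w (sup (fun x => In x l)) -> (forall e, In e l -> le e w) -> compactL w.
Proof.
  intros H1 H2 H3. replace w with (sup (fun x => In x l)).
  apply compact_list; auto. apply le_antisym; auto. apply sup_least; auto.
Qed.

Lemma cIn (x : L) : compactL x -> compactIn (fun _ : L => True) le x.
Proof.
  intros Hx. split; auto. intros F u _ [_ [Hub Hl]] Hxu.
  destruct (Hx F) as [l [H1 H2]].
  - eapply le_trans; [exact Hxu|]. apply Hl; auto. intros; apply sup_ub; auto.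
  - exists l. split; auto. intros v _ Hv. eapply le_trans; [exact H2|]. apply sup_least; auto.
Qed.

Variable C : L -> Prop.
Hypothesis HC1 : forall c, C c -> compactL c.
Hypothesis HC3 : forall x y, C x -> C y -> C (mul x y).
Hypothesis HC4 : forall a : L, a = sup (fun c => C c /\ le c a).

Lemma compact_fin (x : L) : compactL x -> exists l,
  (forall d, In d l -> C d /\ le d x) /\ le x (sup (fun t => In t l)).
Proof.
  intros Hx. apply Hx. rewrite <- (HC4 x). apply le_refl.
Qed.

Lemma compact_mul (x y : L) : compactL x -> compactL y -> compactL (mul x y).
Proof.
  intros Hx Hy.
  destruct (compact_fin x Hx) as [l1 [A1 B1]].
  destruct (compact_fin y Hy) as [l2 [A2 B2]].
  apply compact_of_list with (l := flat_map (fun c => map (fun d => mul c d) l2) l1).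
  - intros e He. apply in_flat_map in He as [c [Hc He]].
    apply in_map_iff in He as [d [<- Hd]]. apply HC1, HC3; [apply A1|apply A2]; auto.
  - eapply le_trans. apply mul_mono2; eauto.
    apply sup_mul. intros f g Hf Hg. apply sup_ub. apply in_flat_map. exists f; split; auto.
    apply in_map; auto.
  - intros e He. apply in_flat_map in He as [c [Hc He]].
    apply in_map_iff in He as [d [<- Hd]]. apply mul_mono2; [apply A1|apply A2]; auto.
Qed.

Lemma compact_pw (x : L) k : compactL x -> compactL (pw mul one x k).
Proof.
  intros Hx; induction k; simpl. exact (one_compact L). apply compact_mul; auto.
Qed.

Variable m : L.
Hypothesis Hm : maximal m.

Lemma one_not_le_m : ~ le one m.
Proof. destruct Hm as [H _]. intros E. apply H, le_antisym; auto using one_top. Qed.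

Lemma prime (s t : L) : ~ le s m -> ~ le t m -> ~ le (mul s t) m.
Proof.
  destruct Hm as [Hm1 Hmax]. intros Hs Ht Hst.
  assert (J : j2 m s = one).
  { apply Hmax. apply le_j2l. intro E. apply Hs. rewrite <- E. apply le_j2r. }
  apply Ht. replace t with (mul t (j2 m s)) by (rewrite J; apply mulx1).
  unfold j2. rewrite mul_sup. apply sup_least. intros y [x [[-> | ->] ->]].
  - rewrite mulC; apply mul_le_l.
  - rewrite mulC; auto.
Qed.

Lemma pw_not_le (s : L) k : ~ le s m -> ~ le (pw mul one s k) m.
Proof.
  intros Hs; induction k; simpl. apply one_not_le_m. apply prime; auto.
Qed.

Notation loc := (locM m).

Lemma KC (w t z : L) : compactL w -> compactL t -> ~ le t m -> le (mul w t) z -> le w (loc z).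
Proof. intros; apply sup_ub; eauto 6. Qed.

Lemma KL (w z : L) : compactL w -> le w (loc z) ->
  exists s, compactL s /\ ~ le s m /\ le (mul w s) z.
Proof.
  intros Hw H. destruct (Hw _ H) as [l [Hl Hle]].
  assert (exists s, compactL s /\ ~ le s m /\ forall e, In e l -> le (mul e s) z) as [s [Cs [Ns Hs]]].
  { clear Hle. induction l as [|a l IH].
    - exists one; split; [exact (one_compact L)|split; [apply one_not_le_m | intros e []]].
    - destruct IH as [s1 [C1 [N1 H1]]]. { intros; apply Hl; right; auto. }
      destruct (Hl a (or_introl eq_refl)) as [Ca [s0 [Cs0 [Ns0 Hs0]]]].
      exists (mul s0 s1). split; [apply compact_mul; auto|split; [apply prime; auto|]].
      intros e [<-|He].
      + eapply le_trans; [|exact Hs0]. rewrite mulA. apply mul_le_l.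
      + eapply le_trans; [|apply H1; eauto]. rewrite (mulC _ s0 s1), mulA. apply mul_le_l. }
  exists s. split; auto. split; auto.
  eapply le_trans. apply mul_mono_l; eauto. apply sup_mul1. auto.
Qed.

Lemma loc_ge (z : L) : le z (loc z).
Proof.
  apply le_trans with (sup (fun c => C c /\ le c z)). rewrite <- HC4; apply le_refl.
  apply sup_least. intros c [Cc Hc]. apply KC with one; auto.
  exact (one_compact L). apply one_not_le_m. rewrite mulx1; auto.
Qed.

Lemma loc_mono (z w : L) : le z w -> le (loc z) (loc w).
Proof.
  intros H. unfold locM; apply sup_mono. intros x [Cx [s [Cs [Ns Hs]]]].
  split; auto. exists s; split; auto; split; auto. eapply le_trans; eauto.
Qed.

Lemma loc_idem (z : L) : loc (loc z) = loc z.
Proof.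
  apply le_antisym; [|apply loc_ge].
  apply sup_least. intros x [Cx [s [Cs [Ns H]]]].
  destruct (KL (mul x s) z) as [t [Ct [Nt Ht]]]; [apply compact_mul; auto|auto|].
  apply KC with (mul s t); auto. apply compact_mul; auto. apply prime; auto.
  rewrite mulA; auto.
Qed.

Lemma loc_mul_le (u v : L) : le (mul (loc u) (loc v)) (loc (mul u v)).
Proof.
  apply sup_mul. intros f g [Cf [s [Cs [Ns Hs]]]] [Cg [t [Ct [Nt Ht]]]].
  apply KC with (mul s t). apply compact_mul; auto. apply compact_mul; auto.
  apply prime; auto. rewrite shuffle. apply mul_mono2; auto.
Qed.

Lemma mulLm_loc (u v : L) : mulLm m (loc u) (loc v) = loc (mul u v).
Proof.
  unfold mulLm. apply le_antisym.
  - rewrite <- (loc_idem (mul u v)). apply loc_mono, loc_mul_le.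
  - apply loc_mono, mul_mono2; apply loc_ge.
Qed.

Lemma loc_one : loc one = one.
Proof. apply le_antisym. apply one_top. apply loc_ge. Qed.

Lemma pw_loc (x : L) k : pw (mulLm m) one (loc x) k = loc (pw mul one x k).
Proof.
  induction k; simpl. symmetry; apply loc_one. rewrite IHk. apply mulLm_loc.
Qed.

Lemma liftlist (a : L) (l : list L) :
  (forall c, In c l -> exists d, C d /\ le d a /\ c = loc d) ->
  exists ld, (forall d, In d ld -> C d /\ le d a) /\
    forall c, In c l -> exists d, In d ld /\ c = loc d.
Proof.
  induction l as [|c l IH]; intros H.
  - exists []; split; [intros d []|intros e []].
  - destruct (H c (or_introl eq_refl)) as [d [Cd [Hd ->]]].
    destruct IH as [ld [H1 H2]]. { intros; apply H; right; auto. }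
    exists (d :: ld). split.
    + intros e [<-|He]; auto.
    + intros e [<-|He]. exists d; simpl; auto. destruct (H2 e He) as [d' [? ?]].
      exists d'; simpl; auto.
Qed.

Lemma Lm_compact (a : L) : compactIn (inLm m) le a -> exists x, compactL x /\ a = loc x.
Proof.
  intros [[a0 Ha0] Hc].
  assert (Ea : loc a = a) by (rewrite Ha0; apply loc_idem).
  destruct (Hc (fun c => exists d, C d /\ le d a /\ c = loc d) a) as [l [Hl Hub]].
  - intros x [d [_ [_ ->]]]; exists d; auto.
  - split; [exists a0; auto|split].
    + intros x [d [Cd [Hd ->]]]. rewrite <- Ea. apply loc_mono; auto.
    + intros v [v0 ->] Hv. apply le_trans with (sup (fun c => C c /\ le c a)).
      rewrite <- HC4; apply le_refl.
      apply sup_least; intros d [Cd Hd]. eapply le_trans; [apply loc_ge|].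
      apply Hv; exists d; auto.
  - apply le_refl.
  - destruct (liftlist a l Hl) as [ld [H1 H2]].
    exists (sup (fun t => In t ld)). split.
    + apply compact_list. intros e He; apply HC1, H1; auto.
    + apply le_antisym.
      * apply Hub. eexists; eauto. intros c Hcl. destruct (H2 c Hcl) as [d [Hd ->]].
        apply loc_mono, sup_ub; auto.
      * rewrite <- Ea. apply loc_mono. apply sup_least. intros; apply H1; auto.
Qed.

Lemma rearr (x s y : L) k :
  mul (pw mul one (mul x s) k) y = mul (mul (pw mul one x k) y) (pw mul one s k).
Proof.
  assert (E : pw mul one (mul x s) k = mul (pw mul one x k) (pw mul one s k)).
  { induction k; simpl. symmetry; apply mul1x. rewrite IHk. apply shuffle. }
  rewrite E, <- !mulA, (mulC _ (pw mul one s k) y). reflexivity.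
Qed.

Lemma pw_le (s : L) n : 1 <= n -> le (pw mul one s n) s.
Proof. destruct n; [lia|]. intros; simpl; apply mul_le_l. Qed.

Lemma main_aux (n : nat) (q : L) : 1 <= n ->
  (quasi_nabs (fun _ : L => True) le mul one n q ->
     locM m q <> one ->
     quasi_nabs (inLm m) le (mulLm m) one n (locM m q)) /\
  (weakly_quasi_nabs (fun _ : L => True) le mul one n q ->
     locM m q <> one ->
     weakly_quasi_nabs (inLm m) le (mulLm m) one n (locM m q)).
Proof.
  intros Hn. split.
  - intros [_ [_ Hq]] Hqm. split; [exists q; auto|split; auto].
    intros a b Ha Hb Hab.
    destruct (Lm_compact a Ha) as [x [Cx ->]].
    destruct (Lm_compact b Hb) as [y [Cy ->]].
    rewrite !pw_loc, !mulLm_loc in *.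
    destruct (KL (mul (pw mul one x n) y) q) as [s [Cs [Ns Hs]]].
    { apply compact_mul; auto. apply compact_pw; auto. }
    { eapply le_trans; [apply loc_ge|exact Hab]. }
    destruct (Hq (mul x s) y) as [H1|H1].
    + apply cIn, compact_mul; auto.
    + apply cIn; auto.
    + rewrite rearr. eapply le_trans; [|exact Hs]. apply mul_mono_r, pw_le; auto.
    + left. rewrite <- (loc_idem q). apply loc_mono.
      apply KC with (pw mul one s n); auto using compact_pw, pw_not_le.
      rewrite <- (mulx1 (pw mul one (mul x s) n)) in H1.
      rewrite rearr, mulx1 in H1. auto.
    + right. rewrite <- (loc_idem q). apply loc_mono.
      apply KC with (pw mul one s (n-1)); auto using compact_pw, pw_not_le.
      apply compact_mul; auto using compact_pw.
      rewrite <- rearr; auto.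
  - intros [_ [_ Hq]] Hqm. split; [exists q; auto|split; auto].
    intros a b Ha Hb Hbot Hab.
    destruct (Lm_compact a Ha) as [x [Cx ->]].
    destruct (Lm_compact b Hb) as [y [Cy ->]].
    rewrite !pw_loc, !mulLm_loc in *.
    destruct (KL (mul (pw mul one x n) y) q) as [s [Cs [Ns Hs]]].
    { apply compact_mul; auto. apply compact_pw; auto. }
    { eapply le_trans; [apply loc_ge|exact Hab]. }
    destruct (Hq (mul x s) y) as [H1|H1].
    + apply cIn, compact_mul; auto.
    + apply cIn; auto.
    + intros HB. apply Hbot. split; [eexists; eauto|].
      intros v [v0 ->]. rewrite <- (loc_idem v0). apply loc_mono.
      apply KC with (pw mul one s n); auto using compact_pw, pw_not_le.
      apply compact_mul; auto using compact_pw.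
      rewrite <- rearr. apply HB; auto.
    + rewrite rearr. eapply le_trans; [|exact Hs]. apply mul_mono_r, pw_le; auto.
    + left. rewrite <- (loc_idem q). apply loc_mono.
      apply KC with (pw mul one s n); auto using compact_pw, pw_not_le.
      rewrite <- (mulx1 (pw mul one (mul x s) n)) in H1.
      rewrite rearr, mulx1 in H1. auto.
    + right. rewrite <- (loc_idem q). apply loc_mono.
      apply KC with (pw mul one s (n-1)); auto using compact_pw, pw_not_le.
      apply compact_mul; auto using compact_pw.
      rewrite <- rearr; auto.
Qed.

End S.

Theorem mainTheorem10 (L : MultLattice) (n : nat) (m q : L) :
  C_lattice L -> 1 <= n -> maximal m -> q <> one ->
  (quasi_nabs (fun _ : L => True) le mul one n q ->
     locM m q <> one ->
     quasi_nabs (inLm m) le (mulLm m) one n (locM m q)) /\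
  (weakly_quasi_nabs (fun _ : L => True) le mul one n q ->
     locM m q <> one ->
     weakly_quasi_nabs (inLm m) le (mulLm m) one n (locM m q)).
Proof.
  intros [C [HC1 [HC2 [HC3 HC4]]]] Hn Hm _.
  eapply main_aux; eauto.
Qed.
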